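(* Let $F$ be an absolutely continuous c.d.f. with density $f$ satisfying condition set 1 (defined in the context). Let $i=i(n)$ satisfy $i\to\infty$ and $i/n\to0$ as $n\to\infty$, and define $a_n=F^{-1}\!\left(1-\frac{i}{n}\right)$ and $b_n=\frac{\sqrt{i}}{n f(a_n)}$. Then $\lim_{n\to\infty}\frac{a_n}{b_n}=\infty$.
   Context: Condition set 1: with hazard rate $h(x)\triangleq f(x)/(1-F(x))$, (i) $F^{-1}(1)=\infty$ (the distribution has unbounded support), and (ii) either $\lim_{x\to\infty} x h(x)=c_0$ for some constant $c_0>0$, or $\lim_{x\to\infty}\frac{d}{dx}\frac{1}{h(x)}=0$. *)

(* Defs.v *)
From HB Require Import structures.
From mathcomp Require Import all_boot all_order all_algebra.
From mathcomp Require Import all_classical all_reals all_analysis.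
Set Implicit Arguments. Unset Strict Implicit. Unset Printing Implicit Defensive.
Import Order.TTheory GRing.Theory Num.Theory.
Import numFieldNormedType.Exports.
Local Open Scope classical_set_scope.
Local Open Scope ring_scope.

Definition is_cdf {R : realType} (F : R -> R) : Prop :=
  {homo F : x y / x <= y} /\
  (forall x : R, F y @[y --> x^'+] --> F x) /\
  (F x @[x --> -oo] --> (0:R)) /\
  (F x @[x --> +oo] --> (1:R)).

Definition density_of {R : realType} (F f : R -> R) : Prop :=
  measurable_fun setT f /\ (forall x, 0 <= f x) /\
  forall x : R,
    ((F x)%:E = \int[lebesgue_measure]_(t in `]-oo, x]) (f t)%:E)%E.

Definition hazard {R : realType} (F f : R -> R) (x : R) : R := f x / (1 - F x).

Definition quantile {R : realType} (F : R -> R) (p : R) : R :=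
  inf [set x : R | p <= F x].

Definition condition_set_1 {R : realType} (F f : R -> R) : Prop :=
  (* (i) F^{-1}(1) = oo, i.e. { x | F x >= 1 } is empty *)
  (forall x : R, F x < 1) /\
  ((exists c0 : R, 0 < c0 /\ (x * hazard F f x) @[x --> +oo] --> c0) \/
   ((\forall x \near +oo,
        0 < hazard F f x /\ derivable (fun y => (hazard F f y)^-1) x 1) /\
    (derive1 (fun y => (hazard F f y)^-1) x) @[x --> +oo] --> (0:R))).

(* Main.v *)
Require Import Defs.
From HB Require Import structures.
From mathcomp Require Import all_boot all_order all_algebra.
From mathcomp Require Import all_classical all_reals all_analysis.
From mathcomp Require Import ring lra.
From mathcomp Require Import measurable_realfun lebesgue_integral_theory.lebesgue_integrable.
Import Order.TTheory GRing.Theory Num.Theory.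
Import numFieldNormedType.Exports.
Local Open Scope classical_set_scope.
Local Open Scope ring_scope.

Lemma left_le (R : realType) (F f : R -> R) (a q : R) :
  density_of F f -> (forall x, x < a -> F x < q) -> F a <= q.
Proof.
move=> [mf [f0 hF]] hq.
have mfE : measurable_fun setT (EFin \o f) by apply/measurable_EFinP.
have intf : (@lebesgue_measure R).-integrable `]-oo, a] (EFin \o f).
  apply/integrableP; split; first exact: measurable_funS mfE.
  rewrite (_ : (fun x => _) = (fun x => (f x)%:E)); last first.
    by apply/funext => x /=; rewrite ger0_norm.
  by rewrite -hF ltry.
have intg : (@lebesgue_measure R).-integrable setT (EFin \o (f \_ `]-oo, a])).
  by rewrite -restrict_EFin; apply/integrable_restrict => //=; rewrite setTI.
apply/ler_addgt0Pr => e e0.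
have [d [d0 hd]] := integral_normr_continuous intg e0.
set x := a - d / 2.
have xa : x < a by rewrite /x ltrBlDr ltrDl divr_gt0.
have Fxa : (F a)%:E = ((F x)%:E + \int[lebesgue_measure]_(t in `]x, a]) (f t)%:E)%E.
  rewrite !hF -ge0_integral_setU //=.
  - by rewrite -itv_bndbnd_setU// bnd_simp ltW.
  - by apply: measurable_funS mfE.
  - by move=> y _; rewrite lee_fin.
  - apply/disj_set2P; rewrite -subset0 => z/=; rewrite !in_itv/= => -[zx /andP[xz _]].
    by move: (lt_le_trans xz zx); rewrite ltxx.
have I0 : (0 <= \int[lebesgue_measure]_(t in `]x, a]) (f t)%:E)%E.
  by apply: integral_ge0 => y _; rewrite lee_fin.
set I := (\int[lebesgue_measure]_(t in `]x, a]) (f t)%:E)%E in Fxa I0 *.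
have IE : I = (F a - F x)%:E by rewrite EFinB Fxa addeAC subee ?add0e.
have hlt : a - x < d by rewrite /x opprB addrC subrK ltr_pdivrMr// ltr_pMr// ltr1n.
have hmu : (@lebesgue_measure R `]x, a] < d%:E)%E.
  by rewrite lebesgue_measure_itv/= lte_fin xa -EFinD lte_fin.
have := hd _ (measurable_itv `]x, a]) hmu.
rewrite /Rintegral (_ : (\int[_]_(t in _) _)%E = I); last first.
  apply: eq_integral => t /[!inE] /= tx.
  rewrite patchE ifT ?ger0_norm//.
  by rewrite inE /=; move: tx; rewrite !in_itv /= => /andP[_ ->].
rewrite IE /= => h.
move: h; rewrite ltrBlDl => h; apply/ltW; apply: (lt_trans h); rewrite ltrD2r; exact: hq.
Qed.

Lemma quant_lt (R : realType) (F : R -> R) (q : R) :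
  is_cdf F -> 0 < q -> forall x, x < quantile F q -> F x < q.
Proof.
move=> [mon [_ [h0 _]]] q0 x xa.
have := cvgr_lt _ h0 _ q0.
move=> [M [_ hM]].
have lb : has_lbound [set x : R | q <= F x].
  exists (M - 1) => s /= qs; rewrite leNgt; apply/negP => sM.
  have : F s < q by apply: hM; rewrite (lt_trans sM)// ltrBlDr ltrDl.
  by rewrite ltNge qs.
rewrite ltNge; apply/negP => qx.
have := ge_inf lb qx.
by rewrite leNgt xa.
Qed.

Lemma quant_ge (R : realType) (F : R -> R) (q y : R) :
  is_cdf F -> q < 1 -> F y < q -> y <= quantile F q.
Proof.
move=> [mon [_ [_ h1]]] q1 Fy.
have := cvgr_gt _ h1 _ q1.
move=> [M [_ hM]].
have ne : [set x : R | q <= F x] !=set0.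
  by exists (M + 1); apply/ltW; apply: hM; rewrite ltrDl.
rewrite leNgt; apply/negP => /(inf_lt ne) [s /= qs sy].
have := mon _ _ (ltW sy).
by rewrite leNgt (lt_le_trans Fy qs).
Qed.

Lemma xh_lb (R : realType) (F f : R -> R) : condition_set_1 F f ->
  exists2 c : R, 0 < c & \forall x \near +oo, c <= x * hazard F f x.
Proof.
move=> [_ [[c0 [c00 hc]]|[hn hd]]].
  exists (c0 / 2); first by rewrite divr_gt0.
  have c2 : c0 / 2 < c0 by rewrite ltr_pdivrMr// ltr_pMr// ltr1n.
  have := cvgr_gt _ hc _ c2.
  move=> h; near=> x; apply/ltW; near: x; exact: h.
set g := fun y => (hazard F f y)^-1 in hn hd.
have h12 : (0:R) < 1/2 by rewrite divr_gt0.
have hd2 := @cvgr_lt _ _ _ _ _ _ hd _ h12.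
have [M [Mr hM]] : \forall x \near +oo,
    (0 < hazard F f x /\ derivable g x 1) /\ derive1 g x < 1/2.
  by near=> x; split; near: x; [exact: hn|exact: hd2].
set x0 := Num.max M 0 + 1.
have mM : M <= Num.max M 0 by rewrite le_max lexx.
have m0 : 0 <= Num.max M 0 by rewrite le_max lexx orbT.
have x0M : M < x0 by rewrite /x0; lra.
have x00 : 0 < x0 by rewrite /x0; lra.
exists 1 => //.
exists (Num.max x0 (2 * g x0)); split; first exact: num_real.
move=> x; rewrite gt_max => /andP[xx0 xg].
have [[hx _] _] := hM x (lt_trans x0M xx0).
have hder : forall y, x0 <= y -> derivable g y 1.
  by move=> y y0; have [[_ ?] _] := hM y (lt_le_trans x0M y0).
have hid : forall y, y \in `]x0, x[ -> is_derive y 1 g (derive1 g y).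
  move=> y; rewrite in_itv/= => /andP[y1 _].
  have := derivableP (hder y (ltW y1)); by rewrite -derive1E.
have hcont : {within `[x0, x], continuous g}.
  apply: derivable_within_continuous => y; rewrite in_itv/= => /andP[y1 _].
  exact: hder.
have [c /[!in_itv]/= /andP[c1 c2] eq] := MVT_segment (ltW xx0) hid hcont.
have gc : derive1 g c < 1/2 by case: (hM c (lt_le_trans x0M c1)).
have gxpos : 0 < g x by rewrite /g invr_gt0; exact: hx.
have : g x <= x.
  have : g x - g x0 <= (x - x0) / 2.
    rewrite eq; have hx0 : 0 <= x - x0 by rewrite subr_ge0 ltW.
    apply: le_trans (ler_wpM2r hx0 (ltW gc)) _; lra.
  lra.
move=> gx.
rewrite mulrC -ler_pdivrMr ?(lt_trans x00 xx0)// mul1r.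
have -> : hazard F f x = (g x)^-1 by rewrite /g invrK.
by rewrite lef_pV2 ?posrE ?(lt_trans x00 xx0).
Unshelve. all: by end_near. Qed.

Theorem lemma2 (R : realType) (F f : R -> R) (i : nat -> nat) :
  is_cdf F -> density_of F f -> condition_set_1 F f ->
  ((i n)%:R : R) @[n --> \oo] --> +oo ->
  ((i n)%:R / n%:R : R) @[n --> \oo] --> (0:R) ->
  let a := fun n : nat => quantile F (1 - (i n)%:R / n%:R) in
  let b := fun n : nat => Num.sqrt ((i n)%:R) / (n%:R * f (a n)) in
  (a n / b n) @[n --> \oo] --> +oo.
Proof.
move=> cdf dens cs hi hp a b.
have F1 : forall x, F x < 1 by case: cs.
have [c c0 hc] := @xh_lb R F f cs.
have n0 : \forall n \near \oo, (0 < n)%N by exists 1%N.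
have i0 : \forall n \near \oo, (0:R) < (i n)%:R by move/cvgryPgt: hi; apply.
have p1 : \forall n \near \oo, (i n)%:R / n%:R < (1:R) by apply: (@cvgr_lt _ _ _ _ _ _ hp).
have p0 : \forall n \near \oo, (0:R) < (i n)%:R / n%:R.
  near=> n; apply: divr_gt0; first by near: n.
  by rewrite ltr0n; near: n.
have aoo : a n @[n --> \oo] --> +oo.
  apply/cvgryPge => A.
  have FA : 0 < 1 - F A by rewrite subr_gt0.
  have hA := @cvgr_lt _ _ _ _ _ _ hp _ FA.
  near=> n.
  apply: quant_ge => //.
    by rewrite ltrBlDr ltrDl; near: n.
  have hpn : (i n)%:R / n%:R < 1 - F A by near: n; exact: hA.
  lra.
have ha : \forall n \near \oo, c <= a n * hazard F f (a n) := aoo _ hc.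
have a0 : \forall n \near \oo, 0 < a n by move/cvgryPgt: aoo; apply.
have Fa : \forall n \near \oo, F (a n) <= 1 - (i n)%:R / n%:R.
  near=> n; apply: (@left_le R F f _ _ dens) => x; apply: quant_lt => //.
  have : (i n)%:R / n%:R < (1:R) by near: n; exact: p1.
  lra.
apply/cvgryPge => A.
set B := `|A| / c.
have hB : \forall n \near \oo, B ^+ 2 <= (i n)%:R by move/cvgryPge: hi; apply.
near=> n.
have nn : (0 < n)%N by near: n.
have ip : (0:R) < (i n)%:R by near: n.
have an : 0 < a n by near: n.
have cah : c <= a n * hazard F f (a n) by near: n.
have Fan : F (a n) <= 1 - (i n)%:R / n%:R by near: n.
have Bi : B ^+ 2 <= (i n)%:R by near: n.
pose s : R := Num.sqrt (i n)%:R.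
have s0 : 0 < s by rewrite sqrtr_gt0.
have ss : s * s = (i n)%:R by rewrite -expr2 sqr_sqrtr// ltW.
have B0 : 0 <= B by rewrite /B divr_ge0 ?(ltW c0).
have Bs : B <= s by rewrite -(ger0_norm B0) -sqrtr_sqr ler_sqrt// ltW.
set h := hazard F f (a n).
have F1a : 0 < 1 - F (a n) by rewrite subr_gt0.
have fa : f (a n) = h * (1 - F (a n)) by rewrite /h /hazard divfK// gt_eqF.
have nR : (0:R) < n%:R by rewrite ltr0n.
have Y : (i n)%:R <= n%:R * (1 - F (a n)).
  rewrite -ler_pdivrMl// mulrC; lra.
have -> : a n / b n = (a n * h) * ((n%:R * (1 - F (a n))) / s).
  by rewrite /b -/s invf_div fa; ring.
have Ys : s <= (n%:R * (1 - F (a n))) / s by rewrite ler_pdivlMr// ss.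
have cB : A <= c * B by rewrite /B mulrC divfK ?gt_eqF// ler_norm.
apply: (le_trans cB); apply: (le_trans (ler_wpM2l (ltW c0) Bs)).
apply: (le_trans (ler_wpM2r (ltW s0) cah)).
by apply: ler_wpM2l => //; apply: le_trans (ltW c0) cah.
Unshelve. all: by end_near. Qed.
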